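(* Let $P$ be a finite poset, let $L=\mathcal{F}(P)$, and let $K=[\hat0_K,\hat1_K]$ be an interval of $L$ (so $\hat1_K\subseteq\hat0_K$ as filters of $P$). Put $S=\hat0_K\setminus\hat1_K$, let $S_0$ be the set of maximal elements of $P\setminus\hat0_K$, and let $S_1$ be the set of minimal elements of $\hat1_K$. Then the following are equivalent: (1) $L={\uparrow\hat0_K}\cup{\downarrow\hat1_K}$, where ${\uparrow\hat0_K}=\{a\in L: a\ge \hat0_K\}$ and ${\downarrow\hat1_K}=\{a\in L: a\le\hat1_K\}$; (2) $K$ is a cutting of $L$; (3) $z<y$ in $P$ for all $z\in S_0$ and all $y\in S_1$; (4) for a new element $x_K\notin P$ there exists a partial order on $P\cup\{x_K\}$ which restricts to the order of $P$ on $P$, in which $x_K$ covers every element of $S_0$ and is covered by every element of $S_1$, and such that the set of elements of $P\cup\{x_K\}$ that are incomparable to $x_K$ is exactly $S$.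
   Context: For a finite poset $P$, a filter is an up-closed subset of $P$. $\mathcal{F}(P)$ denotes the set of all filters of $P$ ordered by reverse inclusion ($F\le G$ iff $F\supseteq G$); it is a finite distributive lattice with least element $P$ and greatest element $\emptyset$. A cutting of a finite distributive lattice $L$ is an interval (convex sublattice) $K$ of $L$ such that every maximal chain of $L$ contains at least one element of $K$. *)

(* Defs.v *)
From mathcomp Require Import all_boot all_order.
Set Implicit Arguments. Unset Strict Implicit. Unset Printing Implicit Defensive.
Import Order.Theory.
Local Open Scope order_scope.

Section FilterLattice.
Context {d : Order.disp_t} {T : finPOrderType d}.

Definition is_filter (A : {set T}) : Prop :=
  forall x y : T, x \in A -> x <= y -> y \in A.

(* The lattice F(P) is ordered by reverse inclusion: A <=_L B iff B \subset A.
   A chain of F(P) is a set of filters any two of which are comparable. *)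
Definition filter_chain (C : {set {set T}}) : Prop :=
  (forall A, A \in C -> is_filter A) /\
  (forall A B, A \in C -> B \in C -> A \subset B \/ B \subset A).

Definition maximal_filter_chain (C : {set {set T}}) : Prop :=
  filter_chain C /\ (forall C', filter_chain C' -> C \subset C' -> C' = C).

(* The interval K = [F0, F1] of F(P) (F0 = bottom of K, F1 = top of K,
   so F1 \subset F0): the filters A with F0 <=_L A <=_L F1. *)
Definition in_interval (F0 F1 A : {set T}) : Prop :=
  is_filter A /\ F1 \subset A /\ A \subset F0.

Definition is_cutting (F0 F1 : {set T}) : Prop :=
  forall C, maximal_filter_chain C -> exists2 A, A \in C & in_interval F0 F1 A.

Definition maxl_outside (F0 : {set T}) (z : T) : Prop :=
  z \notin F0 /\ forall w : T, w \notin F0 -> ~ (z < w).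

Definition minl_in (F1 : {set T}) (y : T) : Prop :=
  y \in F1 /\ forall w : T, w \in F1 -> ~ (w < y).

(* A partial order on option T (None plays the new element x_K). *)
Definition is_partial_order (le : rel (option T)) : Prop :=
  reflexive le /\ antisymmetric le /\ transitive le.

Definition lt_of (le : rel (option T)) (u v : option T) : Prop :=
  le u v /\ u <> v.

Definition covers (le : rel (option T)) (v u : option T) : Prop :=
  lt_of le u v /\ forall w, ~ (lt_of le u w /\ lt_of le w v).

End FilterLattice.

(* Main.v *)
Require Import Defs.
From Stdlib Require Import Classical_Prop.
From mathcomp Require Import all_boot all_order.
Import Order.Theory.
Local Open Scope order_scope.

Section Proofs.
Variables (d : Order.disp_t) (T : finPOrderType d) (F0 F1 : {set T}).
Hypotheses (hF0 : is_filter F0) (hF1 : is_filter F1) (hsub : F1 \subset F0).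

Lemma down_proper (z w : T) : z < w -> [set v | v <= z] \proper [set v | v <= w].
Proof.
move=> zw; apply/properP; split.
  apply/subsetP => v; rewrite !inE => vz; exact: le_trans vz (ltW zw).
by exists w; rewrite !inE ?lexx // lt_geF.
Qed.

Lemma my_up_max a : a \notin F0 -> exists z, maxl_outside F0 z /\ a <= z.
Proof.
move=> aF.
pose P := [pred w | (w \notin F0) && (a <= w)].
have Pa : P a by rewrite /P /= aF lexx.
case: (arg_maxnP (fun w => #|[set v | v <= w]|) Pa) => z /andP[zF az] zmax.
exists z; split => //; split => // w wF zw.
have := zmax w; rewrite /P /= wF (le_trans az (ltW zw)) => /(_ isT).
apply/negP; rewrite -ltnNge; apply: fintype.proper_card; exact: down_proper.
Qed.

Lemma my_down_min b : b \in F1 -> exists y, minl_in F1 y /\ y <= b.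
Proof.
move=> bF.
pose P := [pred w | (w \in F1) && (w <= b)].
have Pb : P b by rewrite /P /= bF lexx.
case: (arg_minnP (fun w => #|[set v | v <= w]|) Pb) => y /andP[yF yb] ymin.
exists y; split => //; split => // w wF wy.
have := ymin w; rewrite /P /= wF (le_trans (ltW wy) yb) => /(_ isT).
apply/negP; rewrite -ltnNge; apply: fintype.proper_card; exact: down_proper.
Qed.

Definition P1 := forall A : {set T}, is_filter A -> A \subset F0 \/ F1 \subset A.
Definition P3 := forall z y : T, maxl_outside F0 z -> minl_in F1 y -> z < y.

Lemma L31 : P3 -> P1.
Proof.
move=> H3 A fA; case: (boolP (A \subset F0)) => [|nA]; [by left|right].
case/subsetPn: nA => a aA aF.
case: (my_up_max _ aF) => z [zm az].
have zA := fA _ _ aA az.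
apply/subsetP => b bF1; case: (my_down_min _ bF1) => y [ym yb].
apply: (fA _ _ _ yb); exact: (fA _ _ zA (ltW (H3 _ _ zm ym))).
Qed.

Lemma L13 : P1 -> P3.
Proof.
move=> H1 z y [zF zmax] [yF ymin].
pose A := [set w | (z <= w) || ((w \in F1) && (w != y))].
have fA : is_filter A.
  move=> u v; rewrite !inE => /orP[zu|/andP[uF uy]] uv; apply/orP.
    by left; exact: le_trans zu uv.
  right; rewrite (hF1 _ _ uF uv) /=; apply/eqP => vy; subst v.
  by apply: (ymin u uF); rewrite lt_neqAle uy uv.
have zA : z \in A by rewrite inE lexx.
case: (H1 A fA) => [sub|sub].
  by rewrite (subsetP sub _ zA) in zF.
have := subsetP sub _ yF; rewrite inE eqxx andbF orbF => zy.
rewrite lt_neqAle zy andbT; apply/eqP => e; subst.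
by rewrite (subsetP hsub _ yF) in zF.
Qed.

Definition P4 := exists le : rel (option T),
        is_partial_order le /\
        (forall a b : T, le (Some a) (Some b) = (a <= b)) /\
        (forall z : T, maxl_outside F0 z -> covers le None (Some z)) /\
        (forall y : T, minl_in F1 y -> covers le (Some y) None) /\
        (forall a : T, (~ le (Some a) None /\ ~ le None (Some a)) <->
                       a \in F0 :\: F1).

Lemma L43 : P4 -> P3.
Proof.
move=> [le [[_ [_ tr]] [res [hz [hy _]]]]] z y zm ym.
have [[lzN _] _] := hz z zm.
have [[lNy _] _] := hy y ym.
have := tr _ _ _ lzN lNy; rewrite res => zy.
rewrite lt_neqAle zy andbT; apply/eqP => e; subst.
by case: zm => zF _; rewrite (subsetP hsub _ ym.1) in zF.
Qed.

Lemma L34 : P3 -> P4.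
Proof.
move=> H3.
pose le (u v : option T) : bool := match u, v with
 | Some a, Some b => a <= b
 | Some a, None => a \notin F0
 | None, Some b => b \in F1
 | None, None => true end.
exists le; split; [split; [|split]|split; [|split; [|split]]].
- by case => //= a; rewrite lexx.
- case => [a|] [b|] //=.
  + by move/le_anti => ->.
  + by case/andP => aF bF; rewrite (subsetP hsub _ bF) in aF.
  + by case/andP => bF aF; rewrite (subsetP hsub _ bF) in aF.
- case => [b|] [a|] [c|] //=.
  + exact: le_trans.
  + move=> ab; apply: contra => aF; exact: hF0 _ _ aF ab.
  + move=> bF bc; exact: hF1 _ _ bF bc.
  + move=> aF cF; case: (my_up_max _ aF) => z [zm az]; case: (my_down_min _ cF) => y [ym yc].
    exact: le_trans az (le_trans (ltW (H3 _ _ zm ym)) yc).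
- by [].
- move=> z [zF zmax]; split; first by split.
  case => [c|] [[/= zc ne] [/= cF ne2]]; last by apply: ne2.
  apply: (zmax c cF); rewrite lt_neqAle zc andbT; apply/eqP => e; subst; exact: ne.
- move=> y [yF ymin]; split; first by split.
  case => [c|] [[/= cF ne1] [/= cy ne]]; last by apply: ne1.
  apply: (ymin c cF); rewrite lt_neqAle cy andbT; apply/eqP => e; subst; exact: ne.
- move=> a /=; rewrite in_setD.
  by case: (a \in F1); case: (a \in F0); split => //= [[]].
Qed.

Lemma L12 : P1 -> is_cutting F0 F1.
Proof.
move=> H1 C [[fC cC] mC].
have helper : forall X, is_filter X ->
    (forall M, M \in C -> M \subset X \/ X \subset M) -> X \in C.
  move=> X fX hX.
  have ch : filter_chain (X |: C).
    split.
      by move=> M; rewrite in_setU1 => /orP[/eqP->|/fC].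
    move=> M N; rewrite !in_setU1 => /orP[/eqP->|MC] /orP[/eqP->|NC].
    - by left; exact: subxx.
    - by case: (hX N NC); [right|left].
    - exact: hX.
    - exact: cC.
  by rewrite -(mC _ ch (subsetU1 X C)) setU11.
case: (boolP [exists M in C, ~~ (M \subset F0)]).
  case/exists_inP => M0 M0C M0n.
  pose P := [pred M | (M \in C) && ~~ (M \subset F0)].
  have PM0 : P M0 by rewrite /P /= M0C M0n.
  case: (arg_minnP (fun M : {set T} => #|M|) PM0) => A /andP[AC An] Amin.
  have fD : is_filter (A :&: F0).
    move=> u v; rewrite !inE => /andP[uA uF] uv.
    by rewrite (fC A AC _ _ uA uv) (hF0 _ _ uF uv).
  exists (A :&: F0).
    apply: helper => // M MC; case: (cC M A MC AC) => [MA|AM].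
      case: (boolP (M \subset F0)) => MF.
        by left; rewrite subsetI MA MF.
      have /eqP-> : M == A by rewrite eqEcard MA Amin //= MC MF.
      by right; exact: subsetIl.
    by right; exact: subset_trans (subsetIl _ _) AM.
  split => //; split; last exact: subsetIr.
  rewrite subsetI hsub andbT; case: (H1 A (fC A AC)) => // h.
  by rewrite h in An.
rewrite negb_exists_in => /forall_inP all.
exists F0.
  by apply: helper => // M MC; left; exact: negbNE (all M MC).
by split => //; split => //; exact: subxx.
Qed.

Lemma my_step (C : {set {set T}}) : filter_chain C -> ~ maximal_filter_chain C ->
  exists C', filter_chain C' /\ C \proper C'.
Proof.
move=> ch nm.
apply: NNPP => hne; apply: nm; split => // C' ch' sub.
apply: NNPP => ne; apply: hne; exists C'; split => //.
rewrite properEneq sub andbT; apply/eqP => e; apply: ne; by rewrite e.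
Qed.

Lemma ext_chain (A : {set T}) n : forall C : {set {set T}}, filter_chain C -> A \in C -> #|~: C| <= n ->
  exists C', maximal_filter_chain C' /\ A \in C'.
Proof.
elim: n => [|n IH] C ch AC hn;
  (case: (classic (maximal_filter_chain C)) => [m|nm]; first by exists C);
  case: (my_step _ ch nm) => C' [ch' pr];
  have lt : #|~: C'| < #|~: C| by apply: fintype.proper_card; rewrite properC.
- by move: (leq_trans lt hn).
- apply: (IH C' ch') => //; last by move: (leq_trans lt hn).
  by apply: (subsetP (proper_sub pr)).
Qed.

Lemma L21 : is_cutting F0 F1 -> P1.
Proof.
move=> H2 A fA.
have ch : filter_chain [set A].
  split; first by move=> M; rewrite inE => /eqP->.
  by move=> M N; rewrite !inE => /eqP-> /eqP->; left; exact: subxx.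
have [C [mC AC]] := ext_chain A _ _ ch (set11 A) (max_card _).
case: (H2 C mC) => B BC [fB [F1B BF0]].
case: mC => [[_ cC] _].
case: (cC A B AC BC) => [AB|BA].
  by left; exact: subset_trans AB BF0.
by right; exact: subset_trans F1B BA.
Qed.

End Proofs.

Theorem theorem2 (d : Order.disp_t) (T : finPOrderType d) (F0 F1 : {set T})
  (hF0 : is_filter F0) (hF1 : is_filter F1) (hsub : F1 \subset F0) :
  [<->
    (* (1) L = up(F0) \cup down(F1) *)
    (forall A : {set T}, is_filter A -> A \subset F0 \/ F1 \subset A);
    (* (2) K is a cutting of L *)
    is_cutting F0 F1;
    (* (3) z < y for all z in S0, y in S1 *)
    (forall z y : T, maxl_outside F0 z -> minl_in F1 y -> z < y);
    (* (4) extension by x_K *)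
    (exists le : rel (option T),
        is_partial_order le /\
        (forall a b : T, le (Some a) (Some b) = (a <= b)) /\
        (forall z : T, maxl_outside F0 z -> covers le None (Some z)) /\
        (forall y : T, minl_in F1 y -> covers le (Some y) None) /\
        (forall a : T, (~ le (Some a) None /\ ~ le None (Some a)) <->
                       a \in F0 :\: F1))].
Proof.
tfae => [h1|h2|h3|h4].
- by apply: L12.
- by apply: L13 => //; apply: L21.
- by apply: L34.
- by apply: L31; apply: L43.
Qed.
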